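(* Let $I$ be a 3-SAT instance and $E(I)$ the chore division instance constructed from it (see context), and let $(p,X)$ be a competitive equilibrium of $E(I)$. Let $C_r$ be a clause containing a literal on the variable $x_i$. Then: (1) if the literal is $x_i$ and $X_{a^i_1,b^i_2}>0$, then $p(m^r_i)\ge \tfrac{3\varepsilon}{2}$; (2) if the literal is $\neg x_i$ and $X_{a^i_1,b^i_2}=0$, then $p(m^r_i)\ge 2\varepsilon$.
   Context: Chore division with fixed earnings: agents $A$, chores $B$ each with supply one, disutility $d:A\times B\to(0,\infty)$, earnings $e:A\to\mathbb{R}_{\ge0}$, threshold $\tau$. A competitive equilibrium is $(p,X)$, $p\in\mathbb{R}^{B}_{\ge0}$, $X\in\mathbb{R}^{A\times B}_{\ge0}$, with (1) $X_{ab}>0$ only if $d(a,b)<\tau$ and $d(a,b)/p(b)\le d(a,b')/p(b')$ for all chores $b'$ (ratio with zero price is $+\infty$); (2) $\sum_b X_{ab}p(b)=e(a)$ for all $a$; (3) $\sum_a X_{ab}=1$ for all $b$. Construction $E(I)$: Let $I$ be a 3-SAT instance with variables $x_1,\dots,x_n$ and clauses $C_1,\dots,C_m$, each a disjunction of exactly three literals on three distinct variables. Fix constants $\tau>3$, $0<\varepsilon<1$ and $0<\varepsilon'<\varepsilon/2$. For each variable $x_i$ there are agents $a^i_1,a^i_2$ with $e(a^i_1)=e(a^i_2)=1$ and chores $b^i_1,b^i_2$, with $d(a^i_1,b^i_1)=1$, $d(a^i_1,b^i_2)=3$, $d(a^i_2,b^i_2)=1$. For each clause $C_r$ whose literals involve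 variables $x_i,x_j,x_k$ there are agents $n^r_i,n^r_j,n^r_k,\mathbf{n}^r$ and chores $m^r_i,m^r_j,m^r_k$; for each $\theta\in\{i,j,k\}$: if the literal is $x_\theta$, then $d(n^r_\theta,b^\theta_2)=d(\mathbf{n}^r,b^\theta_2)=1$ and $d(n^r_\theta,m^r_\theta)=d(\mathbf{n}^r,m^r_\theta)=\varepsilon$; if the literal is $\neg x_\theta$, then $d(n^r_\theta,b^\theta_1)=d(\mathbf{n}^r,b^\theta_1)=2/3$ and $d(n^r_\theta,m^r_\theta)=d(\mathbf{n}^r,m^r_\theta)=4\varepsilon/3$. All other disutilities equal $\tau$. Earnings: $e(n^r_\theta)=\varepsilon$ and $e(\mathbf{n}^r)=\#(C_r)\cdot\tfrac{\varepsilon}{2}+\overline{\#}(C_r)\cdot\varepsilon-\varepsilon'$, where $\#(C_r)$ and $\overline{\#}(C_r)$ are the numbers of unnegated and negated literals of $C_r$. *)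

(* Defs.v *)
From HB Require Import structures.
From mathcomp Require Import all_boot all_order all_algebra.
Set Implicit Arguments. Unset Strict Implicit. Unset Printing Implicit Defensive.
Import Order.TTheory GRing.Theory Num.Theory.
Local Open Scope ring_scope.

Section Market.
Variables (R : realFieldType) (A B : finType).

(* Comparison of disutility-per-price ratios, with the convention that a ratio
   with zero price is +oo:   d(a,b)/p(b) <= d(a,b')/p(b').  *)
Definition ratio_le (d : A -> B -> R) (p : B -> R) (a : A) (b b' : B) : bool :=
  (p b' == 0) || ((p b != 0) && (d a b / p b <= d a b' / p b')).

Definition competitive_equilibrium (d : A -> B -> R) (e : A -> R) (tau : R)
    (p : B -> R) (X : A -> B -> R) : Prop :=
  (forall b, 0 <= p b) /\ (forall a b, 0 <= X a b) /\
  (forall a b, 0 < X a b -> d a b < tau /\ forall b', ratio_le d p a b b') /\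
  (forall a, \sum_(b : B) X a b * p b = e a) /\
  (forall b, \sum_(a : A) X a b = 1).
End Market.

(* A 3-SAT instance with n variables and m clauses: clause r has three literals
   indexed by t : 'I_3; literal t of clause r is on variable [var r t] and is
   unnegated iff [pos r t].  Variables in a clause are distinct (var r injective). *)

(* agents: a^i_1 | a^i_2 | n^r_theta (indexed by clause r and literal position t) | bold n^r *)
Definition agentE (n m : nat) : finType := (('I_n + 'I_n) + (('I_m * 'I_3) + 'I_m))%type.
(* chores: b^i_1 | b^i_2 | m^r_theta *)
Definition choreE (n m : nat) : finType := (('I_n + 'I_n) + ('I_m * 'I_3))%type.

Definition ag1 {n m} (i : 'I_n) : agentE n m := inl (inl i).
Definition ag2 {n m} (i : 'I_n) : agentE n m := inl (inr i).
Definition agN {n m} (r : 'I_m) (t : 'I_3) : agentE n m := inr (inl (r, t)).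
Definition agNB {n m} (r : 'I_m) : agentE n m := inr (inr r).
Definition ch1 {n m} (i : 'I_n) : choreE n m := inl (inl i).
Definition ch2 {n m} (i : 'I_n) : choreE n m := inl (inr i).
Definition chM {n m} (r : 'I_m) (t : 'I_3) : choreE n m := inr (r, t).

Section Construction.
Variables (R : realFieldType) (n m : nat)
  (var : 'I_m -> 'I_3 -> 'I_n) (pos : 'I_m -> 'I_3 -> bool)
  (tau eps eps' : R).

(* disutility of the clause agents (both n^r_t and bold n^r) for chore m^r_t *)
Definition dM (r : 'I_m) (t : 'I_3) : R := if pos r t then eps else 4 * eps / 3.

Definition dE (a : agentE n m) (b : choreE n m) : R :=
  match a, b with
  | inl (inl i), inl (inl j) => if i == j then 1 else tau        (* a^i_1, b^j_1 *)
  | inl (inl i), inl (inr j) => if i == j then 3 else tau        (* a^i_1, b^j_2 *)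
  | inl (inr i), inl (inr j) => if i == j then 1 else tau        (* a^i_2, b^j_2 *)
  | inr (inl (r, t)), inl (inl j) =>                              (* n^r_t, b^j_1 *)
      if (var r t == j) && ~~ pos r t then 2 / 3 else tau
  | inr (inl (r, t)), inl (inr j) =>                              (* n^r_t, b^j_2 *)
      if (var r t == j) && pos r t then 1 else tau
  | inr (inl (r, t)), inr (r', t') =>                             (* n^r_t, m^r'_t' *)
      if (r == r') && (t == t') then dM r t else tau
  | inr (inr r), inl (inl j) =>                                   (* bold n^r, b^j_1 *)
      if [exists t, (var r t == j) && ~~ pos r t] then 2 / 3 else tau
  | inr (inr r), inl (inr j) =>                                   (* bold n^r, b^j_2 *)
      if [exists t, (var r t == j) && pos r t] then 1 else tau
  | inr (inr r), inr (r', t') =>                                  (* bold n^r, m^r'_t' *)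
      if r == r' then dM r t' else tau
  | _, _ => tau
  end.

Definition npos (r : 'I_m) : nat := #|[set t : 'I_3 | pos r t]|.
Definition nneg (r : 'I_m) : nat := #|[set t : 'I_3 | ~~ pos r t]|.

Definition eE (a : agentE n m) : R :=
  match a with
  | inl _ => 1
  | inr (inl _) => eps
  | inr (inr r) => (npos r)%:R * (eps / 2) + (nneg r)%:R * eps - eps'
  end.
End Construction.

(* Main.v *)
Require Import Defs.
From HB Require Import structures.
From mathcomp Require Import all_boot all_order all_algebra.
From mathcomp Require Import lra.
Import Order.TTheory GRing.Theory Num.Theory.
Local Open Scope ring_scope.

Lemma divle (R : realFieldType) (x y a b : R) :
  0 < a -> 0 < b -> x / a <= y / b -> x * b <= y * a.
Proof. by move=> ha hb; rewrite ler_pdivrMr // mulrAC ler_pdivlMr. Qed.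

Lemma sum2 (R : realFieldType) (T : finType) (F : T -> R) c1 c2 :
  c1 != c2 -> (forall b, b != c1 -> b != c2 -> F b = 0) ->
  \sum_b F b = F c1 + F c2.
Proof.
move=> ne H; rewrite (bigD1 c1) //= (bigD1 c2) /=; last by rewrite eq_sym.
by rewrite big1 ?addr0 // => b /andP[h1 h2]; apply: H.
Qed.

Lemma sum1 (R : realFieldType) (T : finType) (F : T -> R) c1 :
  (forall b, b != c1 -> F b = 0) -> \sum_b F b = F c1.
Proof.
move=> H; rewrite (bigD1 c1) //=.
by rewrite big1 ?addr0 // => b h1; apply: H.
Qed.

Lemma le_sum2 (R : realFieldType) (T : finType) (F : T -> R) c1 c2 :
  c1 != c2 -> (forall b, 0 <= F b) -> F c1 + F c2 <= \sum_b F b.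
Proof.
move=> ne H; rewrite (bigD1 c1) //= (bigD1 c2) /=; last by rewrite eq_sym.
by rewrite addrA lerDl sumr_ge0.
Qed.

Lemma le_sum1 (R : realFieldType) (T : finType) (F : T -> R) c1 :
  (forall b, 0 <= F b) -> F c1 <= \sum_b F b.
Proof. by move=> H; rewrite (bigD1 c1) //= lerDl sumr_ge0. Qed.

Lemma ex_pos (R : realFieldType) (T : finType) (F : T -> R) :
  (forall b, 0 <= F b) -> \sum_b F b != 0 -> exists b, 0 < F b.
Proof.
move=> H Hs; apply/existsP; apply: contraR Hs; rewrite negb_exists => /forallP Hf.
rewrite big1 // => b _; have := Hf b; have := H b.
by rewrite le_eqVlt => /orP[/eqP<-|->].
Qed.

Theorem mainTheorem3 (R : realFieldType) (n m : nat)
    (var : 'I_m -> 'I_3 -> 'I_n) (pos : 'I_m -> 'I_3 -> bool)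
    (Hvar : forall r, injective (var r))
    (tau eps eps' : R)
    (Htau : 3 < tau) (Heps0 : 0 < eps) (Heps1 : eps < 1)
    (Heps'0 : 0 < eps') (Heps'1 : eps' < eps / 2)
    (p : choreE n m -> R) (X : agentE n m -> choreE n m -> R)
    (HCE : competitive_equilibrium (dE var pos tau eps) (eE pos eps eps') tau p X)
    (r : 'I_m) (t : 'I_3) :
  let i := var r t in
  (pos r t -> 0 < X (ag1 i) (ch2 i) -> 3 * eps / 2 <= p (chM r t)) /\
  (~~ pos r t -> X (ag1 i) (ch2 i) = 0 -> 2 * eps <= p (chM r t)).
Proof.
move=> i.
case: HCE => Hp [HX [Hd [He Hs]]].
have Xz : forall a b, ~~ (dE var pos tau eps a b < tau) -> X a b = 0.
  move=> a b hd; have := HX a b; rewrite le_eqVlt => /orP[/eqP<-//|/Hd[h _]].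
  by rewrite h in hd.
have Xle1 : forall a b, X a b <= 1.
  by move=> a b; rewrite -(Hs b); apply: le_sum1 => a'; apply: HX.
have allpos : forall c, 0 < p c -> forall b, 0 < p b.
  move=> c hc b; have [a ha] : exists a, 0 < X a b.
    by apply: ex_pos => //; rewrite Hs oner_neq0.
  have [_ /(_ c)] := Hd a b ha; rewrite /ratio_le (gt_eqF hc) /= => /andP[hb _].
  by rewrite lt_def hb Hp.
have ratio : forall a b b', 0 < X a b -> 0 < p b -> 0 < p b' ->
    dE var pos tau eps a b * p b' <= dE var pos tau eps a b' * p b.
  move=> a b b' ha hb hb'; have [_ /(_ b')] := Hd a b ha.
  rewrite /ratio_le (gt_eqF hb') (gt_eqF hb) /= => h.
  exact: divle.
have Ea1 : X (ag1 i) (ch1 i) * p (ch1 i) + X (ag1 i) (ch2 i) * p (ch2 i) = 1.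
  have := He (ag1 i); rewrite (@sum2 _ _ _ (ch1 i) (ch2 i)) //.
  move=> [[j|j]|[r' t']]; rewrite /ch1 /ch2 => h1 h2; rewrite Xz ?mul0r //= ?ltxx //.
  - by case: eqP => [ej|]; [rewrite ej eqxx in h1 | rewrite ltxx].
  - by case: eqP => [ej|]; [rewrite ej eqxx in h2 | rewrite ltxx].
have Ea2 : X (ag2 i) (ch2 i) * p (ch2 i) = 1.
  have := He (ag2 i); rewrite (@sum1 _ _ _ (ch2 i)) //.
  move=> [[j|j]|[r' t']]; rewrite /ch2 => h1; rewrite Xz ?mul0r //= ?ltxx //.
  by case: eqP => [ej|]; [rewrite ej eqxx in h1 | rewrite ltxx].
have [a ha] : exists a, 0 < X a (chM r t).
  by apply: ex_pos => //; rewrite Hs oner_neq0.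
have hda := (Hd _ _ ha).1.
split.
- move=> hpos hX.
  have p2pos : 0 < p (ch2 i).
    rewrite lt_def Hp andbT; apply/eqP=> h; move: Ea2; rewrite h mulr0.
    by move/eqP; rewrite eq_sym oner_eq0.
  have ap := allpos _ p2pos.
  have r1 := ratio _ _ _ hX p2pos (ap (ch1 i)).
  rewrite /= !eqxx in r1.
  have S2 := @le_sum2 _ _ (fun a => X a (ch2 i)) (ag1 i) (ag2 i) isT (fun a => HX a _).
  rewrite Hs /= in S2.
  have x11 := Xle1 (ag1 i) (ch1 i).
  have x11' := HX (ag1 i) (ch1 i).
  have pb1 := ap (ch1 i).
  have h1 : X (ag1 i) (ch1 i) * p (ch1 i) <= p (ch1 i).
    by rewrite ler_piMl.
  have h2 : X (ag1 i) (ch2 i) * p (ch2 i) + X (ag2 i) (ch2 i) * p (ch2 i) <= p (ch2 i).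
    by rewrite -mulrDl ler_piMl // addr_ge0.
  have pb2 : 3 / 2 <= p (ch2 i) by lra.
  have key : eps * p (ch2 i) <= p (chM r t).
    have := ratio _ _ _ ha (ap _) (ap (ch2 i)).
    move: hda; case: a ha => [[j|j]|[[r' t']|r']] ha /=; rewrite ?ltxx //.
    + case: andP => [[/eqP er /eqP et]|]; last by rewrite ltxx.
      by subst r' t'; rewrite /i !eqxx hpos /dM hpos /= mul1r.
    + case: eqP => [er|]; last by rewrite ltxx.
      subst r'; rewrite /dM hpos.
      have -> : [exists t0, (var r t0 == i) && pos r t0].
        by apply/existsP; exists t; rewrite /i eqxx hpos.
      by move=> _; rewrite mul1r.
  have : eps * (3 / 2) <= eps * p (ch2 i) by rewrite ler_pM2l.
  lra.
- move=> hneg hX.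
  have E1 : X (ag1 i) (ch1 i) * p (ch1 i) = 1 by rewrite -Ea1 hX mul0r addr0.
  have x11 := Xle1 (ag1 i) (ch1 i).
  have x11' := HX (ag1 i) (ch1 i).
  have p1pos : 0 < p (ch1 i).
    rewrite lt_def Hp andbT; apply/eqP=> h; move: E1; rewrite h mulr0.
    by move/eqP; rewrite eq_sym oner_eq0.
  have ap := allpos _ p1pos.
  have pb1 : 1 <= p (ch1 i).
    by rewrite -E1 ler_piMl.
  have key : 2 * eps * p (ch1 i) <= p (chM r t).
    have := ratio _ _ _ ha (ap _) (ap (ch1 i)).
    move: hda; case: a ha => [[j|j]|[[r' t']|r']] ha /=; rewrite ?ltxx //.
    + case: andP => [[/eqP er /eqP et]|]; last by rewrite ltxx.
      subst r' t'; rewrite /i !eqxx hneg /dM (negbTE hneg) /= => _; lra.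
    + case: eqP => [er|]; last by rewrite ltxx.
      subst r'; rewrite /dM (negbTE hneg).
      have -> : [exists t0, (var r t0 == i) && ~~ pos r t0].
        by apply/existsP; exists t; rewrite /i eqxx hneg.
      move=> _; lra.
  have : 2 * eps * 1 <= 2 * eps * p (ch1 i) by rewrite ler_pM2l ?mulr_gt0.
  lra.
Qed.
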